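(* Let $\{\hat x_t\}_{t\ge0}$, $\hat x_t=\frac1M\sum_m x_t^m$, be the average points generated by Algorithm SAVIC (described in the context), and let $\hat D^t$ denote the scaling matrix at iteration $t$, obtained by the update rules in the context, where $D^0$ and all $H^t$ are diagonal with $\alpha I\preceq D^0\preceq\Gamma I$ and $\alpha I\preceq H^t\preceq\Gamma I$ for some $0<\alpha\le\Gamma$. Then $$\|\hat x_{t+1}-x_*\|^2_{\hat D^{t+1}}\le\big(1+(1-\beta_{t+1})C\big)\|\hat x_{t+1}-x_*\|^2_{\hat D^t},$$ with $C=\frac{\Gamma^2}{2\alpha^2}$ for the squared update rule and $C=\frac{2\Gamma}{\alpha}$ for the linear update rule. In particular, if $\beta_{t+1}\ge1-\frac{\gamma\mu\alpha^2}{\Gamma^3}$ (squared rule) or $\beta_{t+1}\ge1-\frac{\gamma\mu\alpha}{4\Gamma^2}$ (linear rule), then $$\|\hat x_{t+1}-x_*\|^2_{\hat D^{t+1}}\le\left(1+\frac{\gamma\mu}{2\Gamma}\right)\|\hat x_{t+1}-x_*\|^2_{\hat D^t}.$$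
   Context: Problem: minimize $f(x)=\frac1M\sum_{m=1}^Mf_m(x)$ over $\mathbb R^d$, $x_*$ a solution; $\mu\ge0$ is the strong convexity constant of the $f_m$, $\gamma>0$ the stepsize. For a positive definite matrix $A$, $\|x\|_A^2=\langle x,Ax\rangle$. Update rules: diagonal matrices $D^t$ satisfy either the squared rule $(D^t)^2=\beta_t(D^{t-1})^2+(1-\beta_t)(H^t)^2$ or the linear rule $D^t=\beta_tD^{t-1}+(1-\beta_t)H^t$, with $\beta_t\in[0,1]$ and $H^t$ diagonal; then $(\hat D^t)_{ii}=\max\{\alpha,|D^t_{ii}|\}$. Algorithm SAVIC: stepsize $\gamma$, $x_0^m=x_0$, synchronization times $t_0=0<t_1<\dots$; at $t=t_p$ the preconditioner $\hat D^{t_p}$ is updated and is used (by all clients) for all $t_p\le t<t_{p+1}$ (so the scaling matrix at iteration $t$ is $\hat D^{t_p}$); client $m$ samples $z_m\sim\mathcal D_m$ and sets $x_{t+1}^m=\frac1M\sum_j(x_t^j-\gamma(\hat D^{t_p})^{-1}\nabla f_j(x_t^j,z_j))$ if $t=t_p$ for some $p$, else $x_{t+1}^m=x_t^m-\gamma(\hat D^{t_p})^{-1}\nabla f_m(x_t^m,z_m)$. *)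

(* Defs.v *)
From mathcomp Require Import all_boot all_order all_algebra.
Set Implicit Arguments. Unset Strict Implicit. Unset Printing Implicit Defensive.
Import Order.TTheory GRing.Theory Num.Theory.
Local Open Scope ring_scope.

(* Vectors of R^d are functions 'I_d -> R; diagonal matrices are represented
   by their diagonal, also a function 'I_d -> R. *)

Section Defs.
Variables (R : realFieldType) (d : nat).

Definition vec := 'I_d -> R.

Definition wnorm2 (w v : vec) : R := \sum_(i < d) w i * v i ^+ 2.

Definition sqnorm (v : vec) : R := \sum_(i < d) v i ^+ 2.

Definition vsub (u v : vec) : vec := fun i => u i - v i.

(* (\hat D)_ii = max{alpha, |D_ii|} *)
Definition clip (alpha : R) (D : vec) : vec := fun i => Num.max alpha `|D i|.

Inductive rule := Squared | Linear.

Definition update (r : rule) (beta : R) (Dprev H Dnext : vec) : Prop :=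
  match r with
  | Squared => forall i, Dnext i ^+ 2 = beta * Dprev i ^+ 2 + (1 - beta) * H i ^+ 2
  | Linear  => forall i, Dnext i = beta * Dprev i + (1 - beta) * H i
  end.

Definition Cconst (r : rule) (alpha Gamma : R) : R :=
  match r with
  | Squared => Gamma ^+ 2 / (2 * alpha ^+ 2)
  | Linear  => 2 * Gamma / alpha
  end.

Definition beta_gap (r : rule) (gamma mu alpha Gamma : R) : R :=
  match r with
  | Squared => gamma * mu * alpha ^+ 2 / Gamma ^+ 3
  | Linear  => gamma * mu * alpha / (4 * Gamma ^+ 2)
  end.

(* mu-strong convexity, stated without derivatives. *)
Definition strongly_convex (mu : R) (f : vec -> R) : Prop :=
  forall (x y : vec) (l : R), 0 <= l -> l <= 1 ->
    f (fun i => l * x i + (1 - l) * y i)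
    <= l * f x + (1 - l) * f y - mu / 2 * l * (1 - l) * sqnorm (vsub x y).

(* Index of the last synchronization time t_p <= t (sync times are the t with
   sync t = true; t_0 = 0). *)
Fixpoint last_sync (sync : nat -> bool) (t : nat) : nat :=
  match t with
  | 0 => 0
  | t'.+1 => if sync t'.+1 then t'.+1 else last_sync sync t'
  end.

Definition avg (M : nat) (x : 'I_M -> vec) : vec :=
  fun i => M%:R^-1 * \sum_(m < M) x m i.

End Defs.

(* Main.v *)
Require Import Defs.
From mathcomp Require Import all_boot all_order all_algebra ring lra.
Import Order.TTheory GRing.Theory Num.Theory.
Local Open Scope ring_scope.

Lemma sq (R : realFieldType) (a b c al G : R) : 0 < al -> al <= a -> al <= b -> 0 <= c -> al <= G ->
  b^+2 - a^+2 <= c * G^+2 -> b * (2 * al^+2) <= a * (2 * al^+2 + c * G^+2).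
Proof.
move=> ha hab hb hc hG h.
rewrite leNgt; apply/negP => hlt.
have hk : 0 <= c * G^+2 by nra.
have h1 : (a * (2 * al^+2 + c * G^+2))^+2 < (b * (2 * al^+2))^+2.
  rewrite ltr_pXn2r //= ?nnegrE; nra.
have h2 : b^+2 <= a^+2 + c * G^+2 by lra.
have hs : 0 < al^+2 by nra.
have : (b * (2 * al^+2))^+2 <= (a^+2 + c*G^+2) * (2*al^+2)^+2.
  rewrite exprMn; apply: ler_wpM2r; [nra|lra].
have ha2 : al^+2 <= a^+2 by nra.
move: h1 hk hs ha2; set s := al^+2; set k := c * G^+2 => h1 hk hs ha2 h3.
have h4 : s * k * s <= s * k * a^+2 by rewrite ler_wpM2l // mulr_ge0 // ltW.
have h5 : 0 <= a^+2 * k^+2 by rewrite mulr_ge0 // sqr_ge0.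
have e1 : (a * (2 * s + k))^+2 = 4 * s^+2 * a^+2 + 4 * (s * k * a^+2) + a^+2 * k^+2 by ring.
have e2 : (a^+2 + k) * (2*s)^+2 = 4 * s^+2 * a^+2 + 4 * (s * k * s) by ring.
lra.
Qed.

Theorem corollary1
  (R : realFieldType) (d M : nat) (hM : (0 < M)%N)
  (* problem data *)
  (f : 'I_M -> vec R d -> R) (mu : R) (hmu : 0 <= mu)
  (hconv : forall m, strongly_convex mu (f m))
  (xstar : vec R d)
  (hxstar : forall y : vec R d,
      M%:R^-1 * \sum_(m < M) f m xstar <= M%:R^-1 * \sum_(m < M) f m y)
  (* stochastic gradient realizations: g m t x = grad f_m(x, z_m) at iteration t *)
  (g : 'I_M -> nat -> vec R d -> vec R d)
  (* preconditioner sequence *)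
  (r : rule) (alpha Gamma : R) (halpha : 0 < alpha) (hαΓ : alpha <= Gamma)
  (beta : nat -> R) (hbeta : forall t, 0 <= beta t <= 1)
  (H : nat -> vec R d) (hH : forall t i, alpha <= H t i <= Gamma)
  (D : nat -> vec R d) (hD0 : forall i, alpha <= D 0%N i <= Gamma)
  (hD : forall t, update r (beta t.+1) (D t) (H t.+1) (D t.+1))
  (* algorithm SAVIC *)
  (gamma : R) (hgamma : 0 < gamma)
  (sync : nat -> bool) (hsync0 : sync 0%N)
  (hsync_inf : forall n, exists t, (n <= t)%N /\ sync t)
  (x0 : vec R d) (x : nat -> 'I_M -> vec R d)
  (hx0 : forall m, x 0%N m = x0)
  (hxs : forall t m, sync t ->
      x t.+1 m = (fun i => M%:R^-1 * \sum_(j < M)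
          (x t j i - gamma / clip alpha (D (last_sync sync t)) i * g j t (x t j) i)))
  (hxl : forall t m, ~~ sync t ->
      x t.+1 m = (fun i =>
          x t m i - gamma / clip alpha (D (last_sync sync t)) i * g m t (x t m) i)) :
  forall t : nat,
    wnorm2 (clip alpha (D t.+1)) (vsub (avg (x t.+1)) xstar)
      <= (1 + (1 - beta t.+1) * Cconst r alpha Gamma)
         * wnorm2 (clip alpha (D t)) (vsub (avg (x t.+1)) xstar)
    /\
    (1 - beta_gap r gamma mu alpha Gamma <= beta t.+1 ->
     wnorm2 (clip alpha (D t.+1)) (vsub (avg (x t.+1)) xstar)
      <= (1 + gamma * mu / (2 * Gamma))
         * wnorm2 (clip alpha (D t)) (vsub (avg (x t.+1)) xstar)).
Proof.
have Cge0 : 0 <= Cconst r alpha Gamma.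
  case: r {hD} => /=; apply: divr_ge0; nra.
have key : forall t i, clip alpha (D t.+1) i
    <= (1 + (1 - beta t.+1) * Cconst r alpha Gamma) * clip alpha (D t) i.
  case: r hD Cge0 => /= hD Cge0.
  - have inv : forall t i, alpha <= `|D t i| <= Gamma.
      elim=> [|t IH] i.
        have := hD0 i => /andP[h1 h2]; rewrite ger0_norm; [lra|lra].
      have := hD t i; have := hbeta t.+1; have := hH t.+1 i; have := IH i.
      move=> /andP[a1 a2] /andP[b1 b2] /andP[c1 c2] e.
      have n0 : 0 <= `|D t.+1 i| by [].
      have e2 : `|D t.+1 i| ^+ 2 = beta t.+1 * `|D t i| ^+ 2 + (1 - beta t.+1) * H t.+1 i ^+ 2.
        by rewrite !real_normK ?num_real.
      apply/andP; split.
        rewrite leNgt; apply/negP => hl.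
        have : `|D t.+1 i| ^+ 2 < alpha ^+ 2 by nra.
        have : alpha ^+ 2 <= `|D t i| ^+ 2 by nra.
        have : alpha ^+ 2 <= H t.+1 i ^+ 2 by nra.
        nra.
      rewrite leNgt; apply/negP => hl.
      have : Gamma ^+ 2 < `|D t.+1 i| ^+ 2 by nra.
      have : `|D t i| ^+ 2 <= Gamma ^+ 2 by nra.
      have : H t.+1 i ^+ 2 <= Gamma ^+ 2 by nra.
      nra.
    move=> t i; rewrite /clip.
    have /andP[a1 a2] := inv t i; have /andP[b1 b2] := inv t.+1 i.
    rewrite !max_r //.
    have := hD t i; have := hbeta t.+1; have := hH t.+1 i.
    move=> /andP[c1 c2] /andP[d1 d2] e.
    have hsq := @sq R `|D t i| `|D t.+1 i| (1 - beta t.+1) alpha Gamma halpha a1 b1.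
    have hh : `|D t.+1 i| ^+ 2 - `|D t i| ^+ 2 <= (1 - beta t.+1) * Gamma ^+ 2.
      have n1 : `|D t.+1 i| ^+ 2 = D t.+1 i ^+ 2 by rewrite real_normK ?num_real.
      have n2 : `|D t i| ^+ 2 = D t i ^+ 2 by rewrite real_normK ?num_real.
      rewrite n1 n2 e.
      have : H t.+1 i ^+ 2 <= Gamma ^+ 2 by nra.
      have : 0 <= D t i ^+ 2 by rewrite sqr_ge0.
      nra.
    have := hsq (ltac:(lra)) hαΓ hh => h.
    have ha2 : 0 < 2 * alpha ^+ 2 by nra.
    have -> : (1 + (1 - beta t.+1) * (Gamma ^+ 2 / (2 * alpha ^+ 2))) * `|D t i|
        = (`|D t i| * (2 * alpha ^+ 2 + (1 - beta t.+1) * Gamma ^+ 2)) / (2 * alpha ^+ 2).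
      by field; rewrite gt_eqF.
    by rewrite ler_pdivlMr.
  - have inv : forall t i, alpha <= D t i <= Gamma.
      elim=> [|t IH] i; first exact: hD0.
      have := hD t i; have := hbeta t.+1; have := hH t.+1 i; have := IH i.
      move=> /andP[a1 a2] /andP[b1 b2] /andP[c1 c2] ->.
      apply/andP; split; nra.
    move=> t i; rewrite /clip.
    have /andP[a1 a2] := inv t i; have /andP[b1 b2] := inv t.+1 i.
    rewrite !ger0_norm ?max_r; try lra.
    have := hD t i; have := hbeta t.+1; have := hH t.+1 i.
    move=> /andP[c1 c2] /andP[d1 d2] ->.
    have -> : (1 + (1 - beta t.+1) * (2 * Gamma / alpha)) * D t i
        = D t i + (1 - beta t.+1) * (2 * Gamma) * (D t i / alpha).
      by field; rewrite gt_eqF.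
    have : 1 <= D t i / alpha by rewrite ler_pdivlMr // mul1r.
    have : 0 <= (1 - beta t.+1) * (2 * Gamma) by nra.
    nra.
move=> t.
set v := vsub _ _.
have main : wnorm2 (clip alpha (D t.+1)) v
    <= (1 + (1 - beta t.+1) * Cconst r alpha Gamma) * wnorm2 (clip alpha (D t)) v.
  rewrite /wnorm2 mulr_sumr; apply: ler_sum => i _.
  rewrite [X in _ <= X]mulrA; exact: (ler_wpM2r (sqr_ge0 _) (key t i)).
split => // hb.
apply: (le_trans main).
have w0 : 0 <= wnorm2 (clip alpha (D t)) v.
  rewrite /wnorm2; apply: sumr_ge0 => i _; apply: mulr_ge0; last by rewrite sqr_ge0.
  rewrite /clip; apply: (le_trans (ltW halpha)); by rewrite le_max lexx.
apply: (ler_wpM2r w0).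
rewrite lerD2l.
have hg : 1 - beta t.+1 <= beta_gap r gamma mu alpha Gamma by lra.
apply: (le_trans (ler_wpM2r Cge0 hg)).
have hG : 0 < Gamma by lra.
clear hb; case: r {hD hg Cge0 key main} => /=; rewrite le_eqVlt; apply/orP; left; apply/eqP; field;
  rewrite ?mulf_eq0 ?expf_eq0 ?gt_eqF //; try lra.
Qed.
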